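(* For every $g\in C^\infty(\mathcal G_H)$ and $z\in\mathbb D_H^\circ$, $$(I_0^H)^\sharp g(z)=\Big(d^{1/2}\,(I_0^E)^\sharp\big[\mu^{-2}\,\tilde g\big]\Big)(\Phi(z)),\qquad \tilde g(\beta,\alpha):=g(\beta,\tan\alpha).$$
   Context: $\mathbb D_H^\circ=\{|z|<1\}$ with Poincaré metric $g_H=c^{-2}|dz|^2$, $c=(1-|z|^2)/2$; $\mathcal G_H=\mathbb S^1_\beta\times\mathbb R_a$, $\gamma_{\beta,a}(t)=e^{i\beta}\frac{(2+ia)\tanh(t/2)+ia}{ia\tanh(t/2)-2+ia}$ (unit-speed geodesics). $(I_0^H)^\sharp g(z)=\int_{S_z\mathbb D_H}g(\pi_H(z,w))\,dS_z(w)$, where $\pi_H(z,w)$ is the unique $(\beta,a)$ such that $\gamma_{\beta,a}$ passes through $z$ with velocity $w$, and $dS_z$ is the arclength measure on the $g_H$-unit circle at $z$. $\Phi(z)=\frac{2z}{1+|z|^2}$ maps $\mathbb D_H^\circ$ onto the open Euclidean unit disk; $d(z)=1-|z|^2$. On $(\partial_+S\mathbb D_E)^\circ=\mathbb S^1_\beta\times(-\pi/2,\pi/2)_\alpha$ (point $e^{i\beta}$, direction $e^{i(\beta+\pi+\alpha)}$), $\mu(\beta,\alpha)=\cos\alpha$, and the Euclidean backprojection is $(I_0^E)^\sharp h(y)=\int_0^{2\pi}h(\beta(y,\theta),\alpha(y,\theta))d\theta$ for $y$ in the open disk, where $(\beta(y,\theta),\alpha(y,\theta))$ is the entry point/direction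 of the line through $y$ with direction $e^{i\theta}$ (so $\theta\equiv\beta+\pi+\alpha$). *)

(* Defs.v *)
From Stdlib Require Import Reals ZArith ClassicalEpsilon.
From Coquelicot Require Import Coquelicot.
Open Scope R_scope.

Definition cis (t : R) : C := (cos t, sin t).
Definition Rtanh (x : R) : R := (exp x - exp (- x)) / (exp x + exp (- x)).

(* unit-speed geodesics of the Poincare disk *)
Definition gammaH (beta a t : R) : C :=
  (cis beta * ((RtoC 2 + (0, a) ) * RtoC (Rtanh (t / 2)) + (0, a))
     / ((0, a) * RtoC (Rtanh (t / 2)) - RtoC 2 + (0, a)))%C.

Definition passes_through (beta a : R) (z w : C) : Prop :=
  exists t : R, gammaH beta a t = z /\
    is_derive (fun s => fst (gammaH beta a s)) t (fst w) /\
    is_derive (fun s => snd (gammaH beta a s)) t (snd w).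

Definition piH (z w : C) : R * R :=
  epsilon (inhabits (0, 0)) (fun p => passes_through (fst p) (snd p) z w).

(* conformal factor c = (1-|z|^2)/2 ; g_H = c^{-2}|dz|^2 *)
Definition cH (z : C) : R := (1 - (Cmod z) ^ 2) / 2.

(* (I_0^H)^# g (z): integral over the g_H-unit circle {w = c(z) e^{i theta}};
   its g_H-arclength element is d theta. *)
Definition backprojH (g : R -> R -> R) (z : C) : R :=
  RInt (fun theta => let p := piH z (RtoC (cH z) * cis theta)%C in g (fst p) (snd p))
       0 (2 * PI).

(* Euclidean entry data (beta(y,theta), alpha(y,theta)) of the line through y with
   direction e^{i theta}: entry point e^{i beta}, alpha in (-pi/2,pi/2),
   theta = beta + pi + alpha mod 2 pi. *)
Definition entry_data (y : C) (theta : R) (beta alpha : R) : Prop :=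
  - PI / 2 < alpha < PI / 2 /\
  (exists s : R, 0 <= s /\ y = (cis beta + RtoC s * cis theta)%C) /\
  (exists k : Z, theta = beta + PI + alpha + 2 * PI * IZR k).

Definition entryE (y : C) (theta : R) : R * R :=
  epsilon (inhabits (0, 0)) (fun p => entry_data y theta (fst p) (snd p)).

Definition backprojE (h : R -> R -> R) (y : C) : R :=
  RInt (fun theta => let p := entryE y theta in h (fst p) (snd p)) 0 (2 * PI).

Definition mu (beta alpha : R) : R := cos alpha.
Definition dE (y : C) : R := 1 - (Cmod y) ^ 2.
Definition PhiH (z : C) : C := (RtoC (2 / (1 + (Cmod z) ^ 2)) * z)%C.

Definition jcont (f : R -> R -> R) : Prop :=
  forall p : R * R, continuous (fun q : R * R => f (fst q) (snd q)) p.

Fixpoint Ck (k : nat) (f : R -> R -> R) : Prop :=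
  match k with
  | O => jcont f
  | S k' =>
      (forall x y, ex_derive (fun x' => f x' y) x) /\
      (forall x y, ex_derive (fun y' => f x y') y) /\
      Ck k' (fun x y => Derive (fun x' => f x' y) x) /\
      Ck k' (fun x y => Derive (fun y' => f x y') y)
  end.

Definition smooth2 (f : R -> R -> R) : Prop := forall k, Ck k f.

(* g in C^infty(S^1_beta x R_a): smooth on R^2 and 2pi-periodic in beta *)
Definition smooth_on_GH (g : R -> R -> R) : Prop :=
  smooth2 g /\ forall beta a, g (beta + 2 * PI) a = g beta a.

(* Main.v *)
Require Import Defs.
From Stdlib Require Import Reals ZArith Lia Lra Nsatz ClassicalEpsilon.
From Coquelicot Require Import Coquelicot.
Open Scope R_scope.

Lemma cos_Zper x k : cos (x + 2 * PI * IZR k) = cos x.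
Proof.
  destruct k as [|p|p].
  - change (IZR 0) with 0. rewrite Rmult_0_r, Rplus_0_r; reflexivity.
  - replace (IZR (Z.pos p)) with (INR (Pos.to_nat p)) by (rewrite INR_IZR_INZ, positive_nat_Z; reflexivity).
    replace (2 * PI * INR (Pos.to_nat p)) with (2 * INR (Pos.to_nat p) * PI) by ring.
    apply cos_period.
  - rewrite <- (cos_period (x + 2 * PI * IZR (Z.neg p)) (Pos.to_nat p)).
    f_equal. rewrite INR_IZR_INZ, positive_nat_Z.
    rewrite <- Pos2Z.opp_pos, opp_IZR. ring.
Qed.

Lemma sin_Zper x k : sin (x + 2 * PI * IZR k) = sin x.
Proof.
  destruct k as [|p|p].
  - change (IZR 0) with 0. rewrite Rmult_0_r, Rplus_0_r; reflexivity.
  - replace (IZR (Z.pos p)) with (INR (Pos.to_nat p)) by (rewrite INR_IZR_INZ, positive_nat_Z; reflexivity).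
    replace (2 * PI * INR (Pos.to_nat p)) with (2 * INR (Pos.to_nat p) * PI) by ring.
    apply sin_period.
  - rewrite <- (sin_period (x + 2 * PI * IZR (Z.neg p)) (Pos.to_nat p)).
    f_equal. rewrite INR_IZR_INZ, positive_nat_Z.
    rewrite <- Pos2Z.opp_pos, opp_IZR. ring.
Qed.

Lemma cis_eq_ex a b : cos a = cos b -> sin a = sin b ->
  exists k : Z, a = b + 2 * PI * IZR k.
Proof.
  intros Hc Hs.
  assert (Hsd : sin (a - b) = 0) by (rewrite sin_minus, Hc, Hs; ring).
  assert (Hcd : cos (a - b) = 1).
  { rewrite cos_minus, Hc, Hs. rewrite <- (sin2_cos2 b). unfold Rsqr. ring. }
  destruct (sin_eq_0_0 _ Hsd) as [k Hk].
  destruct (Zeven_odd_dec k) as [He|Ho].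
  - destruct (Zeven_ex _ He) as [j Hj]. exists j. subst k.
    rewrite mult_IZR in Hk. lra.
  - destruct (Zodd_ex _ Ho) as [j Hj]. subst k. exfalso.
    rewrite Hk, plus_IZR, mult_IZR in Hcd.
    replace ((2 * IZR j + 1) * PI) with (PI + 2 * PI * IZR j) in Hcd by ring.
    rewrite cos_Zper, cos_PI in Hcd. lra.
Qed.

Lemma g_Zper (g : R -> R -> R) :
  (forall b a, g (b + 2 * PI) a = g b a) ->
  forall k b a, g (b + 2 * PI * IZR k) a = g b a.
Proof.
  intros Hp k.
  assert (Hn : forall n : nat, forall b a, g (b + 2 * PI * INR n) a = g b a).
  { induction n as [|n IH]; intros b a.
    - simpl. rewrite Rmult_0_r, Rplus_0_r. reflexivity.
    - rewrite S_INR. replace (b + 2 * PI * (INR n + 1)) with ((b + 2 * PI * INR n) + 2 * PI) by ring.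
      rewrite Hp. apply IH. }
  intros b a. destruct k as [|p|p].
  - change (IZR 0) with 0. rewrite Rmult_0_r, Rplus_0_r. reflexivity.
  - replace (IZR (Z.pos p)) with (INR (Pos.to_nat p)) by (rewrite INR_IZR_INZ, positive_nat_Z; reflexivity). apply Hn.
  - rewrite <- (Hn (Pos.to_nat p) (b + 2 * PI * IZR (Z.neg p)) a).
    f_equal. rewrite INR_IZR_INZ, positive_nat_Z.
    rewrite <- Pos2Z.opp_pos, opp_IZR. ring.
Qed.

Lemma g_cis (g : R -> R -> R) :
  (forall b a, g (b + 2 * PI) a = g b a) ->
  forall b1 b2 a, cos b1 = cos b2 -> sin b1 = sin b2 -> g b1 a = g b2 a.
Proof.
  intros Hp b1 b2 a Hc Hs. destruct (cis_eq_ex _ _ Hc Hs) as [k Hk].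
  rewrite Hk. apply g_Zper; auto.
Qed.

Lemma Rtanh_alt x : Rtanh x = (exp x * exp x - 1) / (exp x * exp x + 1).
Proof.
  unfold Rtanh. rewrite exp_Ropp. assert (H := exp_pos x).
  field. split; nra.
Qed.

Lemma Rtanh_bound x : -1 < Rtanh x < 1.
Proof.
  rewrite Rtanh_alt. assert (H := exp_pos x).
  set (e := exp x * exp x). assert (0 < e) by (unfold e; nra).
  split.
  - apply Rmult_lt_reg_r with (e + 1); [lra|]. unfold Rdiv. rewrite Rmult_assoc, Rinv_l; lra.
  - apply Rmult_lt_reg_r with (e + 1); [lra|]. unfold Rdiv. rewrite Rmult_assoc, Rinv_l; lra.
Qed.

Lemma Rtanh_derive t :
  is_derive (fun s => Rtanh (s / 2)) t ((1 - Rtanh (t / 2) ^ 2) / 2).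
Proof.
  unfold Rtanh. auto_derive.
  - assert (H1 := exp_pos (t * / 2)). assert (H2 := exp_pos (- (t * / 2))). lra.
  - unfold Rdiv. rewrite exp_Ropp. assert (H1 := exp_pos (t * / 2)).
    field. split; nra.
Qed.

Lemma Rtanh_ln T : -1 < T < 1 -> Rtanh (ln ((1 + T) / (1 - T)) / 2) = T.
Proof.
  intros HT. rewrite Rtanh_alt.
  rewrite <- exp_plus. replace (ln ((1 + T) / (1 - T)) / 2 + ln ((1 + T) / (1 - T)) / 2)
    with (ln ((1 + T) / (1 - T))) by field.
  rewrite exp_ln.
  - field. lra.
  - apply Rdiv_lt_0_compat; lra.
Qed.

Definition mr (a T : R) : R := ((a * (1 + T)) ^ 2 - 4 * T) / (4 + (a * (1 + T)) ^ 2).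
Definition mi (a T : R) : R := - 2 * (a * (1 + T)) * (1 + T) / (4 + (a * (1 + T)) ^ 2).
Definition dr (a T : R) : R := - 2 * (1 - T ^ 2) * (4 - (a * (1 + T)) ^ 2) / (4 + (a * (1 + T)) ^ 2) ^ 2.
Definition di (a T : R) : R := - 8 * (1 - T ^ 2) * (a * (1 + T)) / (4 + (a * (1 + T)) ^ 2) ^ 2.

Lemma gammaH_eq b a t :
  gammaH b a t = (cos b * mr a (Rtanh (t / 2)) - sin b * mi a (Rtanh (t / 2)),
                  cos b * mi a (Rtanh (t / 2)) + sin b * mr a (Rtanh (t / 2))).
Proof.
  unfold gammaH, cis, mr, mi. set (T := Rtanh (t / 2)).
  unfold Cdiv, Cmult, Cplus, Cminus, Copp, Cinv, RtoC; simpl.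
  assert (0 < 4 + (a * (1 + T)) ^ 2) by (assert (H0 := pow2_ge_0 (a * (1 + T))); lra).
  f_equal; field; replace (a * (1 + T) * (a * (1 + T))) with ((a * (1 + T)) ^ 2) by ring; lra.
Qed.

Lemma four_A2_pos a T : 0 < 4 + (a * (1 + T)) ^ 2.
Proof. assert (H0 := pow2_ge_0 (a * (1 + T))); lra. Qed.

Lemma mr_derive a T : is_derive (mr a) T (- 4 * (4 - (a * (1 + T)) ^ 2) / (4 + (a * (1 + T)) ^ 2) ^ 2).
Proof.
  unfold mr. assert (H := four_A2_pos a T). auto_derive.
  - lra.
  - field. lra.
Qed.

Lemma mi_derive a T : is_derive (mi a) T (- 16 * (a * (1 + T)) / (4 + (a * (1 + T)) ^ 2) ^ 2).
Proof.
  unfold mi. assert (H := four_A2_pos a T). auto_derive.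
  - lra.
  - field. lra.
Qed.

Lemma gammaH_derive b a t :
  is_derive (fun s => fst (gammaH b a s)) t
     (cos b * dr a (Rtanh (t / 2)) - sin b * di a (Rtanh (t / 2))) /\
  is_derive (fun s => snd (gammaH b a s)) t
     (cos b * di a (Rtanh (t / 2)) + sin b * dr a (Rtanh (t / 2))).
Proof.
  set (T := Rtanh (t / 2)).
  assert (HA := four_A2_pos a T).
  assert (Hr : is_derive (fun s => mr a (Rtanh (s / 2))) t
             ((1 - T ^ 2) / 2 * (- 4 * (4 - (a * (1 + T)) ^ 2) / (4 + (a * (1 + T)) ^ 2) ^ 2))).
  { apply (is_derive_comp (mr a) (fun s => Rtanh (s / 2))). apply mr_derive. apply Rtanh_derive. }
  assert (Hi : is_derive (fun s => mi a (Rtanh (s / 2))) t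
             ((1 - T ^ 2) / 2 * (- 16 * (a * (1 + T)) / (4 + (a * (1 + T)) ^ 2) ^ 2))).
  { apply (is_derive_comp (mi a) (fun s => Rtanh (s / 2))). apply mi_derive. apply Rtanh_derive. }
  split.
  - eapply is_derive_ext. { intro s. rewrite gammaH_eq. simpl. reflexivity. }
    eapply is_derive_ext. { intro s. reflexivity. }
    replace (cos b * dr a T - sin b * di a T) with
      (cos b * ((1 - T ^ 2) / 2 * (- 4 * (4 - (a * (1 + T)) ^ 2) / (4 + (a * (1 + T)) ^ 2) ^ 2))
       - sin b * ((1 - T ^ 2) / 2 * (- 16 * (a * (1 + T)) / (4 + (a * (1 + T)) ^ 2) ^ 2)))
      by (unfold dr, di; field; lra).
    apply (is_derive_minus (fun s => cos b * mr a (Rtanh (s / 2))) (fun s => sin b * mi a (Rtanh (s / 2)))).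
    + apply is_derive_scal. exact Hr.
    + apply is_derive_scal. exact Hi.
  - eapply is_derive_ext. { intro s. rewrite gammaH_eq. simpl. reflexivity. }
    replace (cos b * di a T + sin b * dr a T) with
      (cos b * ((1 - T ^ 2) / 2 * (- 16 * (a * (1 + T)) / (4 + (a * (1 + T)) ^ 2) ^ 2))
       + sin b * ((1 - T ^ 2) / 2 * (- 4 * (4 - (a * (1 + T)) ^ 2) / (4 + (a * (1 + T)) ^ 2) ^ 2)))
      by (unfold dr, di; field; lra).
    apply (is_derive_plus (fun s => cos b * mi a (Rtanh (s / 2))) (fun s => sin b * mr a (Rtanh (s / 2)))).
    + apply is_derive_scal. exact Hi.
    + apply is_derive_scal. exact Hr.
Qed.


Lemma one_m_mod a T : 1 - (mr a T ^ 2 + mi a T ^ 2) = 4 * (1 - T ^ 2) / (4 + (a * (1 + T)) ^ 2).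
Proof. unfold mr, mi. assert (H := four_A2_pos a T). field. lra. Qed.

Lemma dr_eq a T : dr a T = (2 * (1 - T ^ 2) / (4 + (a * (1 + T)) ^ 2)) * (- (4 - (a * (1 + T)) ^ 2) / (4 + (a * (1 + T)) ^ 2)).
Proof. unfold dr. assert (H := four_A2_pos a T). field. lra. Qed.

Lemma di_eq a T : di a T = (2 * (1 - T ^ 2) / (4 + (a * (1 + T)) ^ 2)) * (- 4 * (a * (1 + T)) / (4 + (a * (1 + T)) ^ 2)).
Proof. unfold di. assert (H := four_A2_pos a T). field. lra. Qed.

Lemma K_ident a T :
  let p1 := - (4 - (a * (1 + T)) ^ 2) / (4 + (a * (1 + T)) ^ 2) in
  let p2 := - 4 * (a * (1 + T)) / (4 + (a * (1 + T)) ^ 2) in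
  1 - (mr a T * p1 + mi a T * p2) = mr a T - p1 /\
  - (mr a T * p2 - mi a T * p1) = mi a T - p2.
Proof.
  intros p1 p2. unfold p1, p2, mr, mi. assert (H := four_A2_pos a T).
  split; field; lra.
Qed.

Lemma alg_fwd cb sb m1 m2 p1 p2 :
  cb * cb + sb * sb = 1 ->
  1 - (m1 * p1 + m2 * p2) = m1 - p1 ->
  - (m1 * p2 - m2 * p1) = m2 - p2 ->
  let x1 := cb * m1 - sb * m2 in let x2 := cb * m2 + sb * m1 in
  let c := cb * p1 - sb * p2 in let s := cb * p2 + sb * p1 in
  cb * (1 - (x1 * c + x2 * s)) + sb * (x1 * s - x2 * c) = x1 - c /\
  sb * (1 - (x1 * c + x2 * s)) - cb * (x1 * s - x2 * c) = x2 - s.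
Proof.
  intros H K1 K2 x1 x2 c s. unfold x1, x2, c, s. split; nsatz.
Qed.

Lemma Cmod2 (z : C) : Cmod z ^ 2 = fst z * fst z + snd z * snd z.
Proof. rewrite Cmod2_alt. unfold Re, Im. ring. Qed.

Lemma Im_inv (x y : R) : Im (/ (x, y))%C = - y / (x * x + y * y).
Proof. unfold Cinv, Im. simpl. f_equal. ring. Qed.

Lemma HU b a (z v : C) :
  Cmod z < 1 -> fst v * fst v + snd v * snd v = 1 ->
  passes_through b a z (RtoC (cH z) * v)%C ->
  (cis b * (1 - Cconj z * v))%C = (z - v)%C /\
  a = - 2 * Im (/ (1 - Cconj (cis b) * z))%C.
Proof.
  destruct z as [x1 x2], v as [c s]. simpl fst; simpl snd.
  intros Hz Hv [t [Hg [Hd1 Hd2]]].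
  set (T := Rtanh (t / 2)) in *.
  assert (HT := Rtanh_bound (t / 2)). fold T in HT.
  assert (HA := four_A2_pos a T).
  destruct (gammaH_derive b a t) as [D1 D2]. fold T in D1, D2.
  apply is_derive_unique in Hd1. apply is_derive_unique in D1.
  apply is_derive_unique in Hd2. apply is_derive_unique in D2.
  rewrite Hd1 in D1. rewrite Hd2 in D2. clear Hd1 Hd2.
  rewrite gammaH_eq in Hg. fold T in Hg.
  injection Hg as Hx1 Hx2.
  assert (Hcs : cos b * cos b + sin b * sin b = 1) by (rewrite <- (sin2_cos2 b); unfold Rsqr; ring).
  assert (HcH : cH (x1, x2) = 2 * (1 - T ^ 2) / (4 + (a * (1 + T)) ^ 2)).
  { unfold cH. rewrite Cmod2. simpl fst; simpl snd.
    rewrite <- Hx1, <- Hx2.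
    replace ((cos b * mr a T - sin b * mi a T) * (cos b * mr a T - sin b * mi a T) +
      (cos b * mi a T + sin b * mr a T) * (cos b * mi a T + sin b * mr a T))
      with ((cos b * cos b + sin b * sin b) * (mr a T ^ 2 + mi a T ^ 2)) by ring.
    rewrite Hcs, Rmult_1_l.
    assert (E := one_m_mod a T). rewrite E. field. lra. }
  simpl in D1, D2. rewrite HcH in D1, D2.
  rewrite dr_eq, di_eq in D1, D2.
  set (h := 2 * (1 - T ^ 2) / (4 + (a * (1 + T)) ^ 2)) in *.
  assert (Hh : 0 < h).
  { unfold h. apply Rdiv_lt_0_compat; [|lra]. assert (T ^ 2 < 1) by (simpl; nra). lra. }
  destruct (K_ident a T) as [K1 K2].
  set (p1 := - (4 - (a * (1 + T)) ^ 2) / (4 + (a * (1 + T)) ^ 2)) in *.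
  set (p2 := - 4 * (a * (1 + T)) / (4 + (a * (1 + T)) ^ 2)) in *.
  assert (Hc : c = cos b * p1 - sin b * p2).
  { apply Rmult_eq_reg_l with h; [|lra]. rewrite Rmult_0_l, Rminus_0_r in D1. rewrite D1. ring. }
  assert (Hs : s = cos b * p2 + sin b * p1).
  { apply Rmult_eq_reg_l with h; [|lra]. rewrite Rmult_0_l, Rplus_0_r in D2. rewrite D2. ring. }
  destruct (alg_fwd (cos b) (sin b) (mr a T) (mi a T) p1 p2 Hcs K1 K2) as [E1 E2].
  split.
  - unfold cis, Cmult, Cminus, Cplus, Copp, Cconj, RtoC. simpl.
    rewrite <- Hx1, <- Hx2, Hc, Hs.
    f_equal.
    + clear E1 E2. clearbody p1 p2 h. clear - Hcs K1 K2. nsatz.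
    + clear E1 E2. clearbody p1 p2 h. clear - Hcs K1 K2. nsatz.
  - assert (Hm : (Cconj (cis b) * (x1, x2))%C = (mr a T, mi a T)).
    { unfold cis, Cconj, Cmult. simpl. rewrite <- Hx1, <- Hx2. f_equal; clear - Hcs; nsatz. }
    rewrite Hm. unfold Cminus, Cplus, Copp, RtoC. simpl.
    replace ((1 + - mr a T) * ((1 + - mr a T) * 1) + (0 + - mi a T) * ((0 + - mi a T) * 1))
      with (4 * (1 + T) ^ 2 / (4 + (a * (1 + T)) ^ 2)) by (unfold mr, mi; field; lra).
    unfold mi. field. lra.
Qed.

Lemma solve_p m1 m2 p1 p2 :
  (1 - m1) * (1 - m1) + m2 * m2 <> 0 ->
  1 - (m1 * p1 + m2 * p2) = m1 - p1 ->
  - (m1 * p2 - m2 * p1) = m2 - p2 ->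
  p1 = (m2 * m2 - (1 - m1) * (1 - m1)) / ((1 - m1) * (1 - m1) + m2 * m2) /\
  p2 = 2 * (1 - m1) * m2 / ((1 - m1) * (1 - m1) + m2 * m2).
Proof.
  intros Hn K1 K2. split.
  - apply Rmult_eq_reg_r with ((1 - m1) * (1 - m1) + m2 * m2); [|exact Hn].
    unfold Rdiv. rewrite Rmult_assoc, Rinv_l by exact Hn. rewrite Rmult_1_r.
    nsatz.
  - apply Rmult_eq_reg_r with ((1 - m1) * (1 - m1) + m2 * m2); [|exact Hn].
    unfold Rdiv. rewrite Rmult_assoc, Rinv_l by exact Hn. rewrite Rmult_1_r.
    nsatz.
Qed.

Lemma HE b a (z v : C) :
  Cmod z < 1 -> fst v * fst v + snd v * snd v = 1 ->
  (cis b * (1 - Cconj z * v))%C = (z - v)%C ->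
  a = - 2 * Im (/ (1 - Cconj (cis b) * z))%C ->
  passes_through b a z (RtoC (cH z) * v)%C.
Proof.
  destruct z as [x1 x2], v as [c s]. simpl fst; simpl snd.
  intros Hz Hv HE Ha.
  assert (Hcs : cos b * cos b + sin b * sin b = 1) by (rewrite <- (sin2_cos2 b); unfold Rsqr; ring).
  set (cb := cos b) in *. set (sb := sin b) in *.
  set (m1 := cb * x1 + sb * x2). set (m2 := cb * x2 - sb * x1).
  set (p1 := cb * c + sb * s). set (p2 := cb * s - sb * c).
  assert (Hx1 : x1 = cb * m1 - sb * m2) by (unfold m1, m2; clear - Hcs; nsatz).
  assert (Hx2 : x2 = cb * m2 + sb * m1) by (unfold m1, m2; clear - Hcs; nsatz).
  assert (Hc : c = cb * p1 - sb * p2) by (unfold p1, p2; clear - Hcs; nsatz).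
  assert (Hs : s = cb * p2 + sb * p1) by (unfold p1, p2; clear - Hcs; nsatz).
  assert (HR : x1 * x1 + x2 * x2 = m1 * m1 + m2 * m2) by (unfold m1, m2; clear - Hcs; nsatz).
  assert (HR1 : m1 * m1 + m2 * m2 < 1).
  { rewrite <- HR. assert (H2 := Cmod2 (x1, x2)). simpl in H2.
    assert (0 <= Cmod (x1, x2)) by apply Cmod_ge_0.
    rewrite <- H2. simpl. nra. }
  unfold cis, Cmult, Cminus, Cplus, Copp, Cconj, RtoC in HE. simpl in HE.
  fold cb sb in HE.
  injection HE as E1 E2.
  assert (K1 : 1 - (m1 * p1 + m2 * p2) = m1 - p1).
  { unfold m1, m2, p1, p2. clear - Hcs E1 E2. nsatz. }
  assert (K2 : - (m1 * p2 - m2 * p1) = m2 - p2).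
  { unfold m1, m2, p1, p2. clear - Hcs E1 E2. nsatz. }
  set (n := (1 - m1) * (1 - m1) + m2 * m2).
  assert (Hm1 : m1 < 1) by nra.
  assert (Hn : 0 < n) by (unfold n; nra).
  assert (Ha' : a = - 2 * m2 / n).
  { rewrite Ha. unfold cis, Cconj, Cmult, Cminus, Cplus, Copp, RtoC. simpl. fold cb sb.
    match goal with |- -2 * (?N / ?D) = _ =>
      replace D with n by (unfold n, m1, m2; ring); replace N with m2 by (unfold m2; ring) end.
    field. lra. }
  clear Ha.
  set (T := n / (1 - m1) - 1).
  assert (HT : -1 < T < 1).
  { unfold T. split.
    - assert (0 < n / (1 - m1)) by (apply Rdiv_lt_0_compat; lra). lra.
    - assert (n / (1 - m1) < 2); [|lra].
      apply Rmult_lt_reg_r with (1 - m1); [lra|]. unfold Rdiv. rewrite Rmult_assoc, Rinv_l by lra.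
      unfold n. nra. }
  assert (HA := four_A2_pos a T).
  assert (Hmr : mr a T = m1).
  { unfold mr. rewrite Ha'. unfold T. clearbody m1 m2. assert (Hn' : 0 < (1 - m1) * (1 - m1) + m2 * m2) by exact Hn. unfold n. field.
    split; [lra|split;[lra|]].
    match goal with |- 4 * ?X ^ 2 + ?Y ^ 2 <> 0 =>
      assert (0 < X) by (apply Rmult_lt_0_compat; lra);
      assert (0 <= Y ^ 2) by apply pow2_ge_0;
      assert (0 < X ^ 2) by (apply pow_lt; auto); lra end. }
  assert (Hmi : mi a T = m2).
  { unfold mi. rewrite Ha'. unfold T. clearbody m1 m2. assert (Hn' : 0 < (1 - m1) * (1 - m1) + m2 * m2) by exact Hn. unfold n. field.
    split; [lra|split;[lra|]].
    match goal with |- 4 * ?X ^ 2 + ?Y ^ 2 <> 0 =>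
      assert (0 < X) by (apply Rmult_lt_0_compat; lra);
      assert (0 <= Y ^ 2) by apply pow2_ge_0;
      assert (0 < X ^ 2) by (apply pow_lt; auto); lra end. }
  assert (HtT : Rtanh (ln ((1 + T) / (1 - T)) / 2) = T) by (apply Rtanh_ln; exact HT).
  set (t := ln ((1 + T) / (1 - T))) in *.
  assert (HcH : cH (x1, x2) = 2 * (1 - T ^ 2) / (4 + (a * (1 + T)) ^ 2)).
  { unfold cH. rewrite Cmod2. simpl fst; simpl snd. rewrite HR.
    replace (m1 * m1 + m2 * m2) with (mr a T ^ 2 + mi a T ^ 2) by (rewrite Hmr, Hmi; ring).
    rewrite one_m_mod. field. lra. }
  destruct (K_ident a T) as [Q1 Q2]. rewrite Hmr, Hmi in Q1, Q2.
  assert (Hn0 : (1 - m1) * (1 - m1) + m2 * m2 <> 0) by (apply Rgt_not_eq; exact Hn).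
  destruct (solve_p _ _ _ _ Hn0 Q1 Q2) as [S1 S2].
  destruct (solve_p _ _ _ _ Hn0 K1 K2) as [S3 S4].
  rewrite <- S3 in S1. rewrite <- S4 in S2.
  destruct (gammaH_derive b a t) as [D1 D2]. rewrite HtT in D1, D2.
  rewrite dr_eq, di_eq, S1, S2 in D1, D2.
  exists t. split; [|split].
  - rewrite gammaH_eq, HtT, Hmr, Hmi. fold cb sb. f_equal; symmetry; assumption.
  - simpl. rewrite HcH. eapply is_derive_ext; [intro; reflexivity|].
    replace (2 * (1 - T ^ 2) / (4 + (a * (1 + T)) ^ 2) * c - 0 * s) with
      (cos b * (2 * (1 - T ^ 2) / (4 + (a * (1 + T)) ^ 2) * p1) -
       sin b * (2 * (1 - T ^ 2) / (4 + (a * (1 + T)) ^ 2) * p2)); [exact D1|].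
    fold cb sb. rewrite Hc. ring.
  - simpl. rewrite HcH. eapply is_derive_ext; [intro; reflexivity|].
    replace (2 * (1 - T ^ 2) / (4 + (a * (1 + T)) ^ 2) * s + 0 * c) with
      (cos b * (2 * (1 - T ^ 2) / (4 + (a * (1 + T)) ^ 2) * p2) +
       sin b * (2 * (1 - T ^ 2) / (4 + (a * (1 + T)) ^ 2) * p1)); [exact D2|].
    fold cb sb. rewrite Hs. ring.
Qed.

Definition Sy (y : C) (psi : R) : R := snd y * cos psi - fst y * sin psi.
Definition Ky (y : C) (psi : R) : R := Sy y psi / sqrt (1 - Sy y psi ^ 2).
Definition alx (y : C) (psi : R) : R := atan (Ky y psi).
Definition bex (y : C) (psi : R) : R := psi - PI - alx y psi.

Lemma Sy_bound (y : C) psi : fst y * fst y + snd y * snd y < 1 -> 0 < 1 - Sy y psi ^ 2.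
Proof.
  intros H. unfold Sy.
  assert (E : (snd y * cos psi - fst y * sin psi) ^ 2 + (fst y * cos psi + snd y * sin psi) ^ 2
              = fst y * fst y + snd y * snd y).
  { rewrite <- (Rplus_0_r (fst y * fst y + snd y * snd y)).
    replace ((snd y * cos psi - fst y * sin psi) ^ 2 + (fst y * cos psi + snd y * sin psi) ^ 2)
      with ((fst y * fst y + snd y * snd y) * (Rsqr (sin psi) + Rsqr (cos psi))) by (unfold Rsqr; ring).
    rewrite sin2_cos2. ring. }
  assert (0 <= (fst y * cos psi + snd y * sin psi) ^ 2) by apply pow2_ge_0. lra.
Qed.

Lemma alx_asin (y : C) psi : fst y * fst y + snd y * snd y < 1 ->
  alx y psi = asin (Sy y psi).
Proof.
  intros H. assert (H1 := Sy_bound y psi H).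
  unfold alx, Ky. rewrite asin_atan.
  - unfold Rsqr. replace (Sy y psi ^ 2) with (Sy y psi * Sy y psi) by ring. reflexivity.
  - assert (0 <= Sy y psi ^ 2) by apply pow2_ge_0.
    assert (Sy y psi ^ 2 < 1) by lra. simpl in *. nra.
Qed.

Lemma sin_alx (y : C) psi : fst y * fst y + snd y * snd y < 1 -> sin (alx y psi) = Sy y psi.
Proof.
  intros H. assert (H1 := Sy_bound y psi H).
  rewrite alx_asin by exact H. apply sin_asin.
  assert (Sy y psi ^ 2 < 1) by lra. simpl in *. nra.
Qed.

Lemma cos_alx (y : C) psi : fst y * fst y + snd y * snd y < 1 -> cos (alx y psi) = sqrt (1 - Sy y psi ^ 2).
Proof.
  intros H. assert (H1 := Sy_bound y psi H).
  rewrite alx_asin by exact H. rewrite cos_asin.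
  - unfold Rsqr. f_equal. ring.
  - assert (Sy y psi ^ 2 < 1) by lra. simpl in *. nra.
Qed.

Lemma entry_exists (y : C) psi : fst y * fst y + snd y * snd y < 1 ->
  entry_data y psi (bex y psi) (alx y psi).
Proof.
  intros H. assert (H1 := Sy_bound y psi H).
  assert (Hs := sin_alx y psi H). assert (Hc := cos_alx y psi H).
  split; [|split].
  - unfold alx. apply atan_bound.
  - exists (fst y * cos psi + snd y * sin psi + sqrt (1 - Sy y psi ^ 2)). split.
    + assert (HQ0 := sqrt_pos (1 - Sy y psi ^ 2)).
      assert (HQ : sqrt (1 - Sy y psi ^ 2) * sqrt (1 - Sy y psi ^ 2) = 1 - Sy y psi ^ 2) by (apply sqrt_sqrt; lra).
      set (Q := sqrt (1 - Sy y psi ^ 2)) in *. clearbody Q.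
      assert (E : Sy y psi ^ 2 + (fst y * cos psi + snd y * sin psi) ^ 2
              = fst y * fst y + snd y * snd y).
      { unfold Sy. rewrite <- (Rmult_1_r (fst y * fst y + snd y * snd y)).
        rewrite <- (sin2_cos2 psi). unfold Rsqr. ring. }
      nra.
    + set (Q := sqrt (1 - Sy y psi ^ 2)) in *. clearbody Q.
      unfold cis, bex, Cplus, Cmult, RtoC. simpl.
      replace (psi - PI - alx y psi) with ((psi - alx y psi) - PI) by ring.
      repeat rewrite cos_minus. repeat rewrite sin_minus. rewrite cos_PI, sin_PI, Hs, Hc.
      assert (Hcs : cos psi * cos psi + sin psi * sin psi = 1) by (rewrite <- (sin2_cos2 psi); unfold Rsqr; ring).
      unfold Sy. destruct y as [y1 y2]. simpl.
      f_equal; clear - Hcs; nsatz.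
  - apply (ex_intro _ 0%Z). unfold bex. simpl. ring.
Qed.

Lemma entry_unique (y : C) psi b al : fst y * fst y + snd y * snd y < 1 ->
  entry_data y psi b al -> al = alx y psi /\ exists k : Z, b = bex y psi + 2 * PI * IZR k.
Proof.
  intros H [Hal [[s [Hs0 Hy]] [k Hk]]].
  assert (Hsin : sin al = Sy y psi).
  { unfold Sy. rewrite Hy. unfold cis, Cplus, Cmult, RtoC. simpl.
    assert (Hcs : cos psi * cos psi + sin psi * sin psi = 1) by (rewrite <- (sin2_cos2 psi); unfold Rsqr; ring).
    replace ((sin b + (s * sin psi + 0 * cos psi)) * cos psi - (cos b + (s * cos psi - 0 * sin psi)) * sin psi)
      with (sin (b - psi)) by (rewrite sin_minus; ring).
    replace (b - psi) with ((- al - PI) + 2 * PI * IZR (- k)) by (rewrite Hk, opp_IZR; ring).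
    rewrite sin_Zper. replace (- al - PI) with (- (al + PI)) by ring.
    rewrite sin_neg, neg_sin. ring. }
  assert (Hal' : al = alx y psi).
  { rewrite alx_asin by exact H. rewrite <- Hsin. rewrite asin_sin; [reflexivity|lra]. }
  split; [exact Hal'|].
  exists (- k)%Z. unfold bex. rewrite <- Hal', Hk, opp_IZR. ring.
Qed.

Lemma entryE_val (y : C) psi : fst y * fst y + snd y * snd y < 1 ->
  snd (entryE y psi) = alx y psi /\ exists k : Z, fst (entryE y psi) = bex y psi + 2 * PI * IZR k.
Proof.
  intros H. unfold entryE.
  apply entry_unique; [exact H|].
  apply (epsilon_spec (inhabits (0, 0)) (fun p => entry_data y psi (fst p) (snd p))).
  exists (bex y psi, alx y psi). apply entry_exists. exact H.
Qed.

Definition GE (g : R -> R -> R) (y : C) (psi : R) : R :=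
  / (1 - Sy y psi ^ 2) * g (bex y psi) (Ky y psi).

Lemma GE_eq (g : R -> R -> R) (y : C) psi :
  (forall b a, g (b + 2 * PI) a = g b a) ->
  fst y * fst y + snd y * snd y < 1 ->
  (let p := entryE y psi in
   (fun beta alpha => / (mu beta alpha) ^ 2 * g beta (tan alpha)) (fst p) (snd p)) = GE g y psi.
Proof.
  intros Hp H. cbv beta zeta. destruct (entryE_val y psi H) as [E1 [k E2]].
  rewrite E1, E2. unfold mu, GE. rewrite g_Zper by exact Hp.
  rewrite cos_alx by exact H. rewrite pow2_sqrt by (apply Rlt_le, Sy_bound, H).
  unfold alx. rewrite tan_atan. reflexivity.
Qed.

Lemma Sy_per (y : C) psi : Sy y (psi + 2 * PI) = Sy y psi.
Proof.
  unfold Sy. rewrite cos_plus, sin_plus, cos_2PI, sin_2PI. ring.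
Qed.

Lemma GE_per (g : R -> R -> R) (y : C) psi :
  (forall b a, g (b + 2 * PI) a = g b a) -> GE g y (psi + 2 * PI) = GE g y psi.
Proof.
  intros Hp. unfold GE, bex, alx, Ky. rewrite !Sy_per.
  replace (psi + 2 * PI - PI - atan (Sy y psi / sqrt (1 - Sy y psi ^ 2)))
    with ((psi - PI - atan (Sy y psi / sqrt (1 - Sy y psi ^ 2))) + 2 * PI) by ring.
  rewrite Hp. reflexivity.
Qed.

Lemma exd_cont (f : R -> R) (x : R) : ex_derive f x -> continuous f x.
Proof. intros H. exact (@ex_derive_continuous R_AbsRing R_NormedModule f x H). Qed.

Lemma GE_cont (g : R -> R -> R) (y : C) psi :
  jcont g -> fst y * fst y + snd y * snd y < 1 -> continuous (GE g y) psi.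
Proof.
  intros Hg H. unfold GE.
  assert (H1 := Sy_bound y psi H). unfold Sy in H1.
  assert (C1 : continuous (fun psi => / (1 - Sy y psi ^ 2)) psi).
  { apply exd_cont. unfold Sy. auto_derive. lra. }
  assert (C2 : continuous (bex y) psi).
  { apply exd_cont. unfold bex, alx, Ky, Sy. auto_derive.
    repeat split; try lra; try (apply Rgt_not_eq; apply sqrt_lt_R0; lra). }
  assert (C3 : continuous (Ky y) psi).
  { apply exd_cont. unfold Ky, Sy. auto_derive.
    repeat split; try lra; try (apply Rgt_not_eq; apply sqrt_lt_R0; lra). }
  assert (C4 : continuous (fun psi => g (bex y psi) (Ky y psi)) psi).
  { apply (continuous_comp_2 (bex y) (Ky y) g); auto. }
  exact (@continuous_mult R_UniformSpace R_AbsRing _ _ psi C1 C4).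
Qed.

Section Ang.
Variables x1 x2 : R.
Hypothesis Hz : x1 * x1 + x2 * x2 < 1.

Let Rr := x1 * x1 + x2 * x2.
Definition pp (th : R) := x1 * cos th + x2 * sin th.
Definition qq (th : R) := x2 * cos th - x1 * sin th.
Definition Lx (th : R) := (1 + (x1 * x1 + x2 * x2)) * cos th - 2 * pp th * x1.
Definition Ly (th : R) := (1 + (x1 * x1 + x2 * x2)) * sin th - 2 * pp th * x2.
Definition Dd (th : R) := cos th * Lx th + sin th * Ly th.
Definition Nn (th : R) := cos th * Ly th - sin th * Lx th.
Definition Fm (th : R) := th + atan (Nn th / Dd th).

Lemma cs1 th : cos th * cos th + sin th * sin th = 1.
Proof. rewrite <- (sin2_cos2 th); unfold Rsqr; ring. Qed.

Lemma pq_R th : pp th * pp th + qq th * qq th = x1 * x1 + x2 * x2.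
Proof. assert (H := cs1 th). unfold pp, qq. nsatz. Qed.

Lemma Dd_eq th : Dd th = 1 + (x1 * x1 + x2 * x2) - 2 * pp th * pp th.
Proof. assert (H := cs1 th). unfold Dd, Lx, Ly, pp. nsatz. Qed.

Lemma Dd_pos th : 0 < Dd th.
Proof.
  rewrite Dd_eq. assert (H := pq_R th). assert (0 <= qq th * qq th) by nra.
  assert (0 <= x1 * x1 + x2 * x2) by nra. nra.
Qed.

Lemma M2_eq th : Dd th * Dd th + Nn th * Nn th = Lx th * Lx th + Ly th * Ly th.
Proof. assert (H := cs1 th). unfold Dd, Nn. nsatz. Qed.

Lemma M2_eq' th : Dd th * Dd th + Nn th * Nn th = (1 + (x1 * x1 + x2 * x2)) * (1 + (x1 * x1 + x2 * x2)) - 4 * pp th * pp th.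
Proof. assert (H := cs1 th). rewrite M2_eq. unfold Lx, Ly, pp. nsatz. Qed.

Definition Mm (th : R) := sqrt (Dd th * Dd th + Nn th * Nn th).

Lemma Mm_pos th : 0 < Mm th.
Proof.
  unfold Mm. apply sqrt_lt_R0. assert (H := Dd_pos th). nra.
Qed.

Lemma Mm_sq th : Mm th * Mm th = Dd th * Dd th + Nn th * Nn th.
Proof. unfold Mm. apply sqrt_sqrt. nra. Qed.

Lemma cos_sin_F th : cos (Fm th) = Lx th / Mm th /\ sin (Fm th) = Ly th / Mm th.
Proof.
  assert (HD := Dd_pos th). assert (HM := Mm_pos th). assert (HM2 := Mm_sq th).
  assert (HQ : sqrt (1 + (Nn th / Dd th)²) = Mm th / Dd th).
  { rewrite <- (sqrt_Rsqr (Mm th / Dd th)).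
    - f_equal. unfold Rsqr.
      replace (Mm th / Dd th * (Mm th / Dd th)) with (Mm th * Mm th / (Dd th * Dd th)) by (field; lra).
      rewrite HM2. field. lra.
    - apply Rlt_le, Rdiv_lt_0_compat; lra. }
  unfold Fm. rewrite cos_plus, sin_plus, cos_atan, sin_atan, HQ.
  assert (H := cs1 th).
  split.
  - apply Rmult_eq_reg_r with (Mm th); [|lra].
    field_simplify; try lra. unfold Dd, Nn. nsatz.
  - apply Rmult_eq_reg_r with (Mm th); [|lra].
    field_simplify; try lra. unfold Dd, Nn. nsatz.
Qed.


Definition yv : C := (2 * x1 / (1 + (x1 * x1 + x2 * x2)), 2 * x2 / (1 + (x1 * x1 + x2 * x2))).

Lemma R_nonneg : 0 <= x1 * x1 + x2 * x2.
Proof. nra. Qed.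

Lemma Sy_F th : Sy yv (Fm th) = 2 * qq th / Mm th.
Proof.
  destruct (cos_sin_F th) as [Hc Hs]. assert (HM := Mm_pos th). assert (HR := R_nonneg).
  unfold Sy, yv. simpl. rewrite Hc, Hs. unfold Lx, Ly, qq, pp. field. lra.
Qed.

Lemma one_Sy_F th : 1 - Sy yv (Fm th) ^ 2 = ((1 - (x1 * x1 + x2 * x2)) / Mm th) ^ 2.
Proof.
  rewrite Sy_F. assert (HM := Mm_pos th). assert (HM2 := Mm_sq th).
  rewrite M2_eq' in HM2. assert (H := pq_R th).
  replace (1 - (2 * qq th / Mm th) ^ 2) with ((Mm th * Mm th - 4 * qq th * qq th) / (Mm th * Mm th)) by (field; lra).
  replace (((1 - (x1 * x1 + x2 * x2)) / Mm th) ^ 2) with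
    ((1 - (x1 * x1 + x2 * x2)) * (1 - (x1 * x1 + x2 * x2)) / (Mm th * Mm th)) by (field; lra).
  f_equal. rewrite HM2. nsatz.
Qed.

Lemma sqrt_Sy_F th : sqrt (1 - Sy yv (Fm th) ^ 2) = (1 - (x1 * x1 + x2 * x2)) / Mm th.
Proof.
  rewrite one_Sy_F. apply sqrt_pow2. assert (HM := Mm_pos th).
  apply Rlt_le, Rdiv_lt_0_compat; lra.
Qed.

Lemma Ky_F th : Ky yv (Fm th) = 2 * qq th / (1 - (x1 * x1 + x2 * x2)).
Proof.
  unfold Ky. rewrite sqrt_Sy_F, Sy_F. assert (HM := Mm_pos th). field. lra.
Qed.

Lemma yv_in : fst yv * fst yv + snd yv * snd yv < 1.
Proof.
  unfold yv. simpl. assert (HR := R_nonneg).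
  replace (2 * x1 / (1 + (x1 * x1 + x2 * x2)) * (2 * x1 / (1 + (x1 * x1 + x2 * x2))) +
           2 * x2 / (1 + (x1 * x1 + x2 * x2)) * (2 * x2 / (1 + (x1 * x1 + x2 * x2))))
    with (4 * (x1 * x1 + x2 * x2) / ((1 + (x1 * x1 + x2 * x2)) * (1 + (x1 * x1 + x2 * x2)))) by (field; lra).
  apply Rmult_lt_reg_r with ((1 + (x1 * x1 + x2 * x2)) * (1 + (x1 * x1 + x2 * x2))); [nra|].
  unfold Rdiv. rewrite Rmult_assoc, Rinv_l by nra. nra.
Qed.

Lemma cis_bex_F th :
  cos (bex yv (Fm th)) * (Mm th * Mm th) = - (Lx th * (1 - (x1 * x1 + x2 * x2)) + 2 * Ly th * qq th) /\
  sin (bex yv (Fm th)) * (Mm th * Mm th) = - (Ly th * (1 - (x1 * x1 + x2 * x2)) - 2 * Lx th * qq th).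
Proof.
  destruct (cos_sin_F th) as [Hc Hs]. assert (HM := Mm_pos th).
  assert (Hsa := sin_alx yv (Fm th) yv_in). assert (Hca := cos_alx yv (Fm th) yv_in).
  rewrite sqrt_Sy_F in Hca. rewrite Sy_F in Hsa.
  unfold bex. replace (Fm th - PI - alx yv (Fm th)) with ((Fm th - alx yv (Fm th)) - PI) by ring.
  repeat rewrite cos_minus; repeat rewrite sin_minus; rewrite cos_PI, sin_PI, ?Hc, ?Hs, ?Hsa, ?Hca.
  assert (HM0 : Mm th <> 0) by lra. split; field; exact HM0.
Qed.

Lemma L1 th :
  (cis (bex yv (Fm th)) * (1 - Cconj (x1, x2) * (cos th, sin th)))%C = ((x1, x2) - (cos th, sin th))%C.
Proof.
  destruct (cis_bex_F th) as [E1 E2]. assert (HM := Mm_pos th).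
  assert (HM2 := Mm_sq th). rewrite M2_eq' in HM2.
  assert (H := cs1 th).
  unfold cis, Cmult, Cminus, Cplus, Copp, Cconj, RtoC. simpl.
  set (cb := cos (bex yv (Fm th))) in *. set (sb := sin (bex yv (Fm th))) in *.
  clearbody cb sb.
  unfold Lx, Ly, qq, pp in *.
  set (M := Mm th) in *. clearbody M.
  set (c := cos th) in *. set (s := sin th) in *. clearbody c s.
  assert (HMM : M * M <> 0) by (apply Rgt_not_eq; nra).
  clear HM.
  f_equal.
  - apply Rmult_eq_reg_r with (M * M); [|exact HMM].
    clear - E1 E2 HM2 H. nsatz.
  - apply Rmult_eq_reg_r with (M * M); [|exact HMM].
    clear - E1 E2 HM2 H. nsatz.
Qed.

Lemma L2 th :
  Ky yv (Fm th) = - 2 * Im (/ (1 - Cconj (cis (bex yv (Fm th))) * (x1, x2)))%C.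
Proof.
  assert (E := L1 th). rewrite Ky_F.
  assert (Hu := cs1 (bex yv (Fm th))). assert (H := cs1 th).
  assert (G : (1 - Cconj (cis (bex yv (Fm th))) * (x1, x2))%C =
     (1 - (cos (bex yv (Fm th)) * x1 + sin (bex yv (Fm th)) * x2),
      - (cos (bex yv (Fm th)) * x2 - sin (bex yv (Fm th)) * x1))).
  { unfold cis, Cmult, Cminus, Cplus, Copp, Cconj, RtoC. simpl. f_equal; ring. }
  rewrite G, Im_inv. clear G.
  unfold cis, Cmult, Cminus, Cplus, Copp, Cconj, RtoC in E. simpl in E.
  set (cb := cos (bex yv (Fm th))) in *. set (sb := sin (bex yv (Fm th))) in *.
  clearbody cb sb.
  unfold qq.
  set (c := cos th) in *. set (s := sin th) in *. clearbody c s.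
  injection E as E1 E2.
  set (m1 := cb * x1 + sb * x2). set (m2 := cb * x2 - sb * x1).
  assert (K : ((1 - m1) * (1 - m1) + m2 * m2) * (- (x2 * c - x1 * s))
              = (1 - (x1 * x1 + x2 * x2)) * m2).
  { unfold m1, m2. clear - E1 E2 Hu H. nsatz. }
  assert (K2 : ((1 - m1) * (1 - m1) + m2 * m2) *
               ((1 - (x1 * c + x2 * s)) * (1 - (x1 * c + x2 * s)) + (x2 * c - x1 * s) * (x2 * c - x1 * s))
              = (1 - (x1 * x1 + x2 * x2)) * (1 - (x1 * x1 + x2 * x2))).
  { unfold m1, m2. clear - E1 E2 Hu H. nsatz. }
  assert (HR1 : 0 < 1 - (x1 * x1 + x2 * x2)) by lra.
  assert (Hn : (1 - m1) * (1 - m1) + m2 * m2 <> 0).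
  { intro Z. rewrite Z in K2. nra. }
  replace (- m2 * - m2) with (m2 * m2) by ring.
  set (n := (1 - m1) * (1 - m1) + m2 * m2) in *. clearbody n.
  apply Rmult_eq_reg_r with (n * (1 - (x1 * x1 + x2 * x2))).
  2: { apply Rmult_integral_contrapositive. split; lra. }
  assert (L : 2 * (x2 * c - x1 * s) / (1 - (x1 * x1 + x2 * x2)) * (n * (1 - (x1 * x1 + x2 * x2)))
              = 2 * (x2 * c - x1 * s) * n) by (field; lra).
  assert (R2 : -2 * (- - m2 / n) * (n * (1 - (x1 * x1 + x2 * x2))) = -2 * m2 * (1 - (x1 * x1 + x2 * x2)))
    by (field; exact Hn).
  rewrite L, R2. clearbody m1 m2. clear - K. nsatz.
Qed.

Definition Fp (th : R) := (1 - (x1 * x1 + x2 * x2) * (x1 * x1 + x2 * x2)) /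
   ((1 + (x1 * x1 + x2 * x2)) * (1 + (x1 * x1 + x2 * x2)) - 4 * pp th * pp th).

Lemma Nn_eq th : Nn th = - 2 * pp th * qq th.
Proof. unfold Nn, Lx, Ly, qq. ring. Qed.

Lemma den_pos th : 0 < (1 + (x1 * x1 + x2 * x2)) * (1 + (x1 * x1 + x2 * x2)) - 4 * pp th * pp th.
Proof.
  rewrite <- M2_eq'. assert (H := Dd_pos th). nra.
Qed.

Lemma Fm_derive th : is_derive Fm th (Fp th).
Proof.
  assert (HD := Dd_pos th).
  apply (is_derive_ext (fun t => t + atan ((- 2 * pp t * qq t) / (1 + (x1 * x1 + x2 * x2) - 2 * pp t * pp t)))).
  { intro t. unfold Fm. rewrite Nn_eq, Dd_eq. reflexivity. }
  assert (HD' := HD). rewrite Dd_eq in HD'.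
  unfold pp, qq in *. auto_derive.
  - lra.
  - unfold Fp, pp. assert (H := cs1 th). assert (HP := den_pos th). unfold pp in HP.
    set (c := cos th) in *. set (s := sin th) in *. clearbody c s.
    replace (x1 * (1 * - s) + x2 * (1 * c)) with (x2 * c - x1 * s) by ring.
    replace (x2 * (1 * - s) + - (x1 * (1 * c))) with (- (x1 * c + x2 * s)) by ring.
    replace (x2 * c + - (x1 * s)) with (x2 * c - x1 * s) by ring.
    assert (Hpq : (x1 * c + x2 * s) * (x1 * c + x2 * s) + (x2 * c - x1 * s) * (x2 * c - x1 * s) = x1 * x1 + x2 * x2) by (clear - H; nsatz).
    set (p := x1 * c + x2 * s) in *. set (q := x2 * c - x1 * s) in *.
    set (R := x1 * x1 + x2 * x2) in *. clearbody p q R.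
    assert (HD2 : 0 < 1 + R + - (2 * p * p)) by lra.
    assert (HN : 0 < (1 + R + - (2 * p * p)) * (1 + R + - (2 * p * p)) + (-2 * p * q) * (-2 * p * q)) by nra.
    transitivity (((1 + R + - (2 * p * p)) * (1 + R + - (2 * p * p)) + (-2 * p * q) * (-2 * p * q)
                   + (-2 * q * q + -2 * p * - p) * (1 + R + - (2 * p * p))
                   - (-2 * p * q) * (- (2 * q * p + 2 * p * q)))
                  / ((1 + R + - (2 * p * p)) * (1 + R + - (2 * p * p)) + (-2 * p * q) * (-2 * p * q))).
    + field. lra.
    + replace ((1 + R + - (2 * p * p)) * (1 + R + - (2 * p * p)) + (-2 * p * q) * (-2 * p * q)) with
        ((1 + R) * (1 + R) - 4 * p * p) by (clear - Hpq; nsatz).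
      f_equal. clear - Hpq. nsatz.
Qed.

Lemma Fp_cont th : continuous Fp th.
Proof.
  apply exd_cont. assert (HP := den_pos th). unfold Fp, pp in *. auto_derive. lra.
Qed.

Lemma Fm_per : Fm (2 * PI) = Fm 0 + 2 * PI.
Proof.
  unfold Fm, Nn, Dd, Lx, Ly, pp. rewrite cos_2PI, sin_2PI, cos_0, sin_0. ring.
Qed.

Lemma PhiH_eq : PhiH (x1, x2) = yv.
Proof.
  unfold PhiH, yv. rewrite Cmod2. simpl. assert (HR := R_nonneg).
  unfold RtoC, Cmult. simpl. f_equal; field; lra.
Qed.

Lemma jac th : sqrt (dE yv) * (Fp th * / (1 - Sy yv (Fm th) ^ 2)) = 1.
Proof.
  assert (HR := R_nonneg).
  assert (Hd : dE yv = ((1 - (x1 * x1 + x2 * x2)) / (1 + (x1 * x1 + x2 * x2))) ^ 2).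
  { unfold dE. rewrite Cmod2. unfold yv. simpl. field. lra. }
  rewrite Hd, sqrt_pow2 by (apply Rlt_le, Rdiv_lt_0_compat; lra).
  rewrite one_Sy_F. assert (HM := Mm_pos th). assert (HM2 := Mm_sq th). rewrite M2_eq' in HM2.
  unfold Fp. rewrite <- HM2. field. lra.
Qed.

End Ang.
Lemma RInt_shift_per (f : R -> R) a T :
  (forall x, continuous f x) -> (forall x, f (x + T) = f x) ->
  RInt f a (a + T) = RInt f 0 T.
Proof.
  intros Hc Hp.
  assert (Ex : forall u w, ex_RInt f u w) by (intros u w; apply (@ex_RInt_continuous R_CompleteNormedModule); intros; apply Hc).
  rewrite <- (RInt_Chasles f a 0 (a + T)) by apply Ex.
  rewrite <- (RInt_Chasles f 0 T (a + T)) by apply Ex.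
  assert (E : RInt f T (a + T) = RInt f 0 a).
  { replace T with (1 * 0 + T) at 1 by ring. replace (a + T) with (1 * a + T) by ring.
    rewrite <- RInt_comp_lin by (apply Ex).
    apply RInt_ext. intros x _. unfold scal; simpl; unfold mult; simpl.
    rewrite !Rmult_1_l, Hp. reflexivity. }
  assert (S : RInt f a 0 = - RInt f 0 a).
  { rewrite <- (opp_RInt_swap f 0 a) by apply Ex. reflexivity. }
  rewrite E, S. unfold plus; simpl. ring.
Qed.

Lemma Cmod_lt (x1 x2 : R) : x1 * x1 + x2 * x2 < 1 -> Cmod (x1, x2) < 1.
Proof.
  intros H. assert (E := Cmod2 (x1, x2)). simpl in E.
  assert (0 <= Cmod (x1, x2)) by apply Cmod_ge_0. nra.
Qed.

Lemma C_cancel (A B X Y : C) : X <> 0%C -> (A * X = Y)%C -> (B * X = Y)%C -> A = B.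
Proof.
  intros HX H1 H2.
  replace A with (A * X * / X)%C by (field; exact HX).
  replace B with (B * X * / X)%C by (field; exact HX).
  rewrite H1, H2. reflexivity.
Qed.

Lemma GH_eq (g : R -> R -> R) (x1 x2 : R) th :
  x1 * x1 + x2 * x2 < 1 -> (forall b a, g (b + 2 * PI) a = g b a) ->
  (let p := piH (x1, x2) (RtoC (cH (x1, x2)) * cis th)%C in g (fst p) (snd p)) =
  g (bex (yv x1 x2) (Fm x1 x2 th)) (Ky (yv x1 x2) (Fm x1 x2 th)).
Proof.
  intros Hz Hp. cbv zeta.
  assert (HzC := Cmod_lt x1 x2 Hz).
  assert (Hv : fst (cis th) * fst (cis th) + snd (cis th) * snd (cis th) = 1) by (apply cs1).
  set (b0 := bex (yv x1 x2) (Fm x1 x2 th)). set (a0 := Ky (yv x1 x2) (Fm x1 x2 th)).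
  assert (HL1 := L1 x1 x2 Hz th). assert (HL2 := L2 x1 x2 Hz th).
  change (cos th, sin th) with (cis th) in HL1. fold b0 in HL1, HL2. fold a0 in HL2.
  assert (Hex : passes_through b0 a0 (x1, x2) (RtoC (cH (x1, x2)) * cis th)%C).
  { apply HE; assumption. }
  assert (Hs := epsilon_spec (inhabits (0, 0))
     (fun p => passes_through (fst p) (snd p) (x1, x2) (RtoC (cH (x1, x2)) * cis th)%C)
     (ex_intro _ (b0, a0) Hex)).
  unfold piH. set (P := epsilon _ _) in *. clearbody P. cbv beta in Hs.
  destruct (HU _ _ _ _ HzC Hv Hs) as [U1 U2].
  assert (HX : (1 - Cconj (x1, x2) * cis th)%C <> 0%C).
  { intro Z. apply (f_equal fst) in Z. unfold cis, Cminus, Cplus, Copp, Cmult, Cconj, RtoC in Z.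
    simpl in Z. assert (H := pq_R x1 x2 th). unfold pp, qq in H.
    assert (0 <= (x2 * cos th - x1 * sin th) * (x2 * cos th - x1 * sin th)) by apply Rle_0_sqr.
    assert (H1 : (x1 * cos th + x2 * sin th) * (x1 * cos th + x2 * sin th) < 1) by lra.
    assert (H2 : x1 * cos th + x2 * sin th < 1) by nra.
    lra. }
  assert (Hc := C_cancel _ _ _ _ HX U1 HL1).
  rewrite U2, Hc, <- HL2.
  apply g_cis; [exact Hp| |].
  - apply (f_equal fst) in Hc. exact Hc.
  - apply (f_equal snd) in Hc. exact Hc.
Qed.

Theorem theorem3p14 (g : R -> R -> R) (z : C) :
  smooth_on_GH g -> Cmod z < 1 ->
  backprojH g z =
  sqrt (dE (PhiH z)) *
    backprojE (fun beta alpha => / (mu beta alpha) ^ 2 * g beta (tan alpha)) (PhiH z).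
Proof.
  intros [Hsm Hp] Hz. destruct z as [x1 x2].
  assert (Hz' : x1 * x1 + x2 * x2 < 1).
  { assert (E := Cmod2 (x1, x2)). simpl in E. assert (0 <= Cmod (x1, x2)) by apply Cmod_ge_0. nra. }
  assert (Hj : jcont g) by exact (Hsm 0%nat).
  rewrite PhiH_eq. set (y := yv x1 x2).
  assert (Hy : fst y * fst y + snd y * snd y < 1) by (apply yv_in; exact Hz').
  unfold backprojE.
  rewrite (RInt_ext _ (GE g y)) by (intros; apply GE_eq; auto).
  unfold backprojH.
  rewrite (RInt_ext _ (fun th => sqrt (dE y) * (Fp x1 x2 th * GE g y (Fm x1 x2 th)))).
  2: { intros th _. lazymatch goal with |- ?a = ?b => change (@eq R a b) end.
       rewrite GH_eq by auto. unfold GE.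
       fold y.
       transitivity ((sqrt (dE y) * (Fp x1 x2 th * / (1 - Sy y (Fm x1 x2 th) ^ 2))) *
                      g (bex y (Fm x1 x2 th)) (Ky y (Fm x1 x2 th))).
       - unfold y. rewrite jac by exact Hz'. ring.
       - ring. }
  assert (Hc : is_RInt (fun th => scal (Fp x1 x2 th) (GE g y (Fm x1 x2 th))) 0 (2 * PI)
                 (RInt (GE g y) (Fm x1 x2 0) (Fm x1 x2 (2 * PI)))).
  { apply (@is_RInt_comp R_CompleteNormedModule).
    - intros x _. apply GE_cont; auto.
    - intros x _. split; [apply Fm_derive; exact Hz'|apply Fp_cont; exact Hz']. }
  assert (Hex : ex_RInt (fun th => Fp x1 x2 th * GE g y (Fm x1 x2 th)) 0 (2 * PI)).
  { eexists. exact Hc. }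
  transitivity (scal (sqrt (dE y)) (RInt (fun th => Fp x1 x2 th * GE g y (Fm x1 x2 th)) 0 (2 * PI))).
  { exact (@RInt_scal R_CompleteNormedModule _ _ _ _ Hex). }
  change (scal (sqrt (dE y)) (RInt (fun th => Fp x1 x2 th * GE g y (Fm x1 x2 th)) 0 (2 * PI)))
    with (sqrt (dE y) * (RInt (fun th => Fp x1 x2 th * GE g y (Fm x1 x2 th)) 0 (2 * PI))).
  f_equal.
  transitivity (RInt (GE g y) (Fm x1 x2 0) (Fm x1 x2 (2 * PI))).
  { exact (is_RInt_unique _ _ _ _ Hc). }
  rewrite Fm_per. apply RInt_shift_per.
  - intro x. apply GE_cont; auto.
  - intro x. apply GE_per. exact Hp.
Qed.
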